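(* Let $\Lambda$ be a consistent normal modal logic, let $M\subseteq\{\Diamond,\Box\}$, and let $C$ be a Boolean clone. (1) If $\Lambda$ is of Type A, then $\mathsf{Clos}^\Lambda_M(C)=C$. (2) If $\Lambda$ is of Type B, then $\mathsf{Clos}^\Lambda_M(C)$ equals $C$ if $M=\emptyset$, $C\sqcup\{\bot\}$ if $M=\{\Diamond\}$, $C\sqcup\{\top\}$ if $M=\{\Box\}$, and $C\sqcup\{\top,\bot\}$ if $M=\{\Diamond,\Box\}$. (3) If $\Lambda$ is of Type C, then $C\subseteq\mathsf{Clos}^\Lambda_M(C)\subseteq D$, where $D$ is $C$ if $M=\emptyset$, $C\sqcup\{\bot\}$ if $M=\{\Diamond\}$, $C\sqcup\{\top\}$ if $M=\{\Box\}$, and $C\sqcup\{\top,\bot\}$ if $M=\{\Diamond,\Box\}$.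
   Context: Modal formulas: $\phi::=x\mid\neg\phi\mid\phi\land\psi\mid\phi\lor\psi\mid\Diamond\phi\mid\Box\phi$. A normal modal logic is a set of modal formulas containing all propositional tautologies, the K axiom and $\Diamond\phi\leftrightarrow\neg\Box\neg\phi$, closed under modus ponens, uniform substitution and necessitation; $\Lambda\vdash\phi$ means $\phi\in\Lambda$. $F_\circ$ ($F_\bullet$) is the one-world frame with a reflexive (irreflexive) world. $\Lambda$ is of Type A if $F_\circ\models\Lambda$; of Type B if $F_\bullet\models\Lambda$ and $\Lambda\vdash\Box^n\bot$ for some $n\ge1$; of Type C if $F_\bullet\models\Lambda$, $\Lambda\not\vdash\Box^n\bot$ for all $n\ge1$, and $\Lambda\vdash\bigvee_{k\le n}\Diamond^k\Box\bot$ for some $n\ge1$. A Boolean function is a map $\{0,1\}^n\to\{0,1\}$ with $n\ge1$ (constants $\top,\bot$ are constant unary functions); a Boolean clone is a set of Boolean functions containing all projections and closed under composition; for sets $C,X$ of Boolean functions, $C\sqcup X$ is the Boolean clone generated by $C\cup X$. For each Boolean function $f$ fix a propositional formula $\phi_f$ defining it. For a set $\Phi$ of modal formulas, $\mathrm{ML}_\Phi$ is the smallest set containing all variables and containing $\oplus_\phi(\psi_1,\dots,\psi_n)$ whenever $\phi(x_1,\dots,x_n)\in\Phi$ and $\psi_i\in\mathrm{ML}_\Phi$; such a formula is identified with the ordinary modal formula obtained by recursively substituting $\psi_i$ for $x_i$ in $\phi$. $\mathrm{ML}_{M\cup O}$ denotes $\mathrm{ML}_\Phi$ where $\Phi$ consists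 of $\Diamond x$ (if $\Diamond\in M$), $\Box x$ (if $\Box\in M$) and $\phi_f$ for $f\in O$. $\mathsf{Clos}^\Lambda_M(O)$ is the set of Boolean functions $f$ such that $\Lambda\vdash\phi_f\leftrightarrow\phi$ for some $\phi\in\mathrm{ML}_{M\cup O}$. *)

(* Defs.v *)
From mathcomp Require Import all_boot.
Set Implicit Arguments. Unset Strict Implicit. Unset Printing Implicit Defensive.

(* Variables x_1, x_2, ... are encoded as Var 0, Var 1, ... *)
Inductive form : Type :=
| Var : nat -> form
| Neg : form -> form
| And : form -> form -> form
| Or  : form -> form -> form
| Dia : form -> form
| Box : form -> form.

Definition Imp (a b : form) : form := Or (Neg a) b.
Definition Iff (a b : form) : form := And (Imp a b) (Imp b a).
Definition FBot : form := And (Var 0) (Neg (Var 0)).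

Fixpoint subst (s : nat -> form) (p : form) : form :=
  match p with
  | Var x => s x
  | Neg a => Neg (subst s a)
  | And a b => And (subst s a) (subst s b)
  | Or a b => Or (subst s a) (subst s b)
  | Dia a => Dia (subst s a)
  | Box a => Box (subst s a)
  end.

(* Evaluation treating variables and modal subformulas as propositional atoms;
   a formula is a propositional tautology (i.e. a substitution instance of a
   classical tautology) iff it is true under every such assignment. *)
Fixpoint teval (v : form -> bool) (p : form) : bool :=
  match p with
  | Var x => v (Var x)
  | Neg a => ~~ teval v a
  | And a b => teval v a && teval v b
  | Or a b => teval v a || teval v b
  | Dia a => v (Dia a)
  | Box a => v (Box a)
  end.

Definition tautology (p : form) : Prop := forall v, teval v p.

Definition normal_logic (L : form -> Prop) : Prop :=
  (forall p, tautology p -> L p) /\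
  [/\ L (Imp (Box (Imp (Var 0) (Var 1))) (Imp (Box (Var 0)) (Box (Var 1)))),
      L (Iff (Dia (Var 0)) (Neg (Box (Neg (Var 0))))),
      (forall p q, L (Imp p q) -> L p -> L q),
      (forall s p, L p -> L (subst s p)) &
      (forall p, L p -> L (Box p))].

Definition consistent (L : form -> Prop) : Prop := exists p, ~ L p.

Fixpoint sat (W : Type) (R : W -> W -> Prop) (V : nat -> W -> Prop)
    (w : W) (p : form) : Prop :=
  match p with
  | Var x => V x w
  | Neg a => ~ sat R V w a
  | And a b => sat R V w a /\ sat R V w b
  | Or a b => sat R V w a \/ sat R V w b
  | Dia a => exists w', R w w' /\ sat R V w' a
  | Box a => forall w', R w w' -> sat R V w' a
  end.

Definition frame_validates (W : Type) (R : W -> W -> Prop) (L : form -> Prop) :=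
  forall p, L p -> forall V w, sat R V w p.

Definition R_circ : unit -> unit -> Prop := fun _ _ => True.
Definition R_bullet : unit -> unit -> Prop := fun _ _ => False.

Fixpoint box_iter (n : nat) (p : form) : form :=
  if n is n'.+1 then Box (box_iter n' p) else p.
Fixpoint dia_iter (n : nat) (p : form) : form :=
  if n is n'.+1 then Dia (dia_iter n' p) else p.

Fixpoint big_dia_boxbot (n : nat) : form :=
  match n with
  | 0 => Box FBot
  | n'.+1 => Or (big_dia_boxbot n') (dia_iter n (Box FBot))
  end.

Definition typeA (L : form -> Prop) : Prop := frame_validates R_circ L.
Definition typeB (L : form -> Prop) : Prop :=
  frame_validates R_bullet L /\ exists n, 0 < n /\ L (box_iter n FBot).
Definition typeC (L : form -> Prop) : Prop :=
  [/\ frame_validates R_bullet L,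
      (forall n, 0 < n -> ~ L (box_iter n FBot)) &
      exists n, 0 < n /\ L (big_dia_boxbot n)].

Record BF := mkBF {
  bf_ar : nat;
  bf_fun : {ffun {ffun 'I_bf_ar -> bool} -> bool};
  bf_pos : 0 < bf_ar }.

Definition bset := BF -> Prop.

Definition proj (n : nat) (hn : 0 < n) (i : 'I_n) : BF :=
  @mkBF n [ffun x : {ffun 'I_n -> bool} => x i] hn.

Definition compose (f : BF) (m : nat) (hm : 0 < m)
    (g : 'I_(bf_ar f) -> {ffun {ffun 'I_m -> bool} -> bool}) : BF :=
  @mkBF m [ffun x : {ffun 'I_m -> bool} => bf_fun f [ffun i => g i x]] hm.

Definition clone (C : bset) : Prop :=
  (forall n (hn : 0 < n) (i : 'I_n), C (proj hn i)) /\
  (forall f m (hm : 0 < m) (g : 'I_(bf_ar f) -> {ffun {ffun 'I_m -> bool} -> bool}),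
     C f -> (forall i, C (@mkBF m (g i) hm)) -> C (compose hm g)).

Definition gen_clone (S : bset) : bset :=
  fun f => forall D, clone D -> (forall g, S g -> D g) -> D f.

Definition join (C X : bset) : bset := gen_clone (fun f => C f \/ X f).

Definition bf_top : BF := @mkBF 1 [ffun _ => true] isT.
Definition bf_bot : BF := @mkBF 1 [ffun _ => false] isT.

Fixpoint modal_free (p : form) : bool :=
  match p with
  | Var _ => true
  | Neg a => modal_free a
  | And a b | Or a b => modal_free a && modal_free b
  | Dia _ | Box _ => false
  end.

Fixpoint vars_below (n : nat) (p : form) : bool :=
  match p with
  | Var x => x < n
  | Neg a | Dia a | Box a => vars_below n a
  | And a b | Or a b => vars_below n a && vars_below n b
  end.

Fixpoint peval (v : nat -> bool) (p : form) : bool :=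
  match p with
  | Var x => v x
  | Neg a => ~~ peval v a
  | And a b => peval v a && peval v b
  | Or a b => peval v a || peval v b
  | Dia a => false
  | Box a => false
  end.

Definition defining (phi : BF -> form) : Prop :=
  forall f, [/\ modal_free (phi f), vars_below (bf_ar f) (phi f) &
             forall v : nat -> bool,
               peval v (phi f) = bf_fun f [ffun i => v (nat_of_ord i)]].

Definition args_subst (n : nat) (psi : 'I_n -> form) : nat -> form :=
  fun k => match insub k with Some i => psi i | None => Var k end.

(* ML_{M u O}; M is given by two booleans (Dia in M, Box in M) *)
Inductive ML (hasDia hasBox : bool) (O : bset) (phi : BF -> form) : form -> Prop :=
| ML_var x : ML hasDia hasBox O phi (Var x)
| ML_dia p : hasDia -> ML hasDia hasBox O phi p ->
             ML hasDia hasBox O phi (subst (fun _ => p) (Dia (Var 0)))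
| ML_box p : hasBox -> ML hasDia hasBox O phi p ->
             ML hasDia hasBox O phi (subst (fun _ => p) (Box (Var 0)))
| ML_op f (psi : 'I_(bf_ar f) -> form) : O f ->
             (forall i, ML hasDia hasBox O phi (psi i)) ->
             ML hasDia hasBox O phi (subst (args_subst psi) (phi f)).

Definition Clos (L : form -> Prop) (hasDia hasBox : bool) (phi : BF -> form)
    (O : bset) : bset :=
  fun f => exists p, ML hasDia hasBox O phi p /\ L (Iff (phi f) p).

Definition Dset (hasDia hasBox : bool) (C : bset) : bset :=
  match hasDia, hasBox with
  | false, false => C
  | true, false => join C (fun f => f = bf_bot)
  | false, true => join C (fun f => f = bf_top)
  | true, true => join C (fun f => f = bf_top \/ f = bf_bot)
  end.

(* Main.v *)
Require Import Defs.
From mathcomp Require Import all_boot.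
Set Implicit Arguments. Unset Strict Implicit. Unset Printing Implicit Defensive.

Fixpoint beval (refl : bool) (v : nat -> bool) (p : form) : bool :=
  match p with
  | Var x => v x
  | Neg a => ~~ beval refl v a
  | And a b => beval refl v a && beval refl v b
  | Or a b => beval refl v a || beval refl v b
  | Dia a => refl && beval refl v a
  | Box a => ~~ refl || beval refl v a
  end.

Lemma sat_beval (refl : bool) (v : nat -> bool) p :
  sat (if refl then R_circ else R_bullet) (fun k _ => v k) tt p <-> beval refl v p.
Proof.
case: refl; elim: p => [k|a IH|a IHa b IHb|a IHa b IHb|a IH|a IH] /=.
all: try by [].
all: try (split=> H; [apply/negP=> /IH; exact H | move=> /IH; exact/negP]).
all: try (split=> [[/IHa -> /IHb ->]|/andP [/IHa ? /IHb ?]] //).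
all: try (split=> [[/IHa ->|/IHb ->]|/orP [/IHa|/IHb]]; rewrite ?orbT //; by [left|right]).
- by split=> [[[] [_ /IH]] //| /IH H]; exists tt.
- by split=> [H|/IH H [] _ //]; apply/IH; exact: H.
all: try by split=> [[? []]| //].
all: try by split=> // _ w' [].
Qed.

Lemma mf_beval refl v p : modal_free p -> beval refl v p = peval v p.
Proof.
elim: p => //= [a IH|a IHa b IHb|a IHa b IHb] => [/IH -> //|/andP[/IHa -> /IHb ->]|/andP[/IHa -> /IHb ->]] //.
Qed.

Lemma beval_subst refl v s p : modal_free p ->
  beval refl v (subst s p) = peval (fun k => beval refl v (s k)) p.
Proof.
elim: p => //= [a IH|a IHa b IHb|a IHa b IHb] => [/IH -> //|/andP[/IHa -> /IHb ->]|/andP[/IHa -> /IHb ->]] //.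
Qed.

Lemma mf_teval v p : modal_free p -> teval v p = peval (fun k => v (Var k)) p.
Proof.
elim: p => //= [a IH|a IHa b IHb|a IHa b IHb] => [/IH -> //|/andP[/IHa -> /IHb ->]|/andP[/IHa -> /IHb ->]] //.
Qed.

Lemma teval_subst v s p : modal_free p ->
  teval v (subst s p) = peval (fun k => teval v (s k)) p.
Proof.
elim: p => //= [a IH|a IHa b IHb|a IHa b IHb] => [/IH -> //|/andP[/IHa -> /IHb ->]|/andP[/IHa -> /IHb ->]] //.
Qed.

Lemma subst_comp s t p : subst s (subst t p) = subst (fun k => subst s (t k)) p.
Proof. by elim: p => //= [a ->|a -> b ->|a -> b ->|a ->|a ->]. Qed.

Lemma subst_vb n s t p : vars_below n p -> (forall k, k < n -> s k = t k) ->
  subst s p = subst t p.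
Proof.
move=> + H; elim: p => /= [k /H //|a IH /IH ->|a IHa b IHb /andP[/IHa -> /IHb ->]
  |a IHa b IHb /andP[/IHa -> /IHb ->]|a IH /IH ->|a IH /IH ->] //.
Qed.

Lemma args_substE n (psi : 'I_n -> form) (i : 'I_n) : args_subst psi i = psi i.
Proof. by rewrite /args_subst valK. Qed.

Lemma mkBF_ext n (F G : {ffun {ffun 'I_n -> bool} -> bool}) hn :
  (forall x, F x = G x) -> mkBF F hn = mkBF G hn.
Proof. by move=> H; congr mkBF; apply/ffunP. Qed.

Lemma taut_iff a b : (forall v, teval v a = teval v b) -> tautology (Iff a b).
Proof. by move=> H v /=; rewrite H; case: (teval v b). Qed.




Lemma Lmp2 L a b c : normal_logic L -> tautology (Imp a (Imp b c)) -> L a -> L b -> L c.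
Proof.
move=> [Ht [_ _ Hmp _ _]] T Ha Hb.
exact: (Hmp _ _ (Hmp _ _ (Ht _ T) Ha) Hb).
Qed.

Lemma Lmp1 L a b : normal_logic L -> tautology (Imp a b) -> L a -> L b.
Proof. move=> [Ht [_ _ Hmp _ _]] T Ha; exact: (Hmp _ _ (Ht _ T) Ha). Qed.

Lemma Liff_refl L a : normal_logic L -> L (Iff a a).
Proof. by move=> [Ht _]; apply: Ht => v /=; case: (teval v a). Qed.

Lemma Liff_sym L a b : normal_logic L -> L (Iff a b) -> L (Iff b a).
Proof. move=> HL; apply: Lmp1 => // v /=; by case: (teval v a); case: (teval v b). Qed.

Lemma Liff_trans L a b c : normal_logic L -> L (Iff a b) -> L (Iff b c) -> L (Iff a c).
Proof.
move=> HL; apply: Lmp2 => // v /=.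
by case: (teval v a); case: (teval v b); case: (teval v c).
Qed.

Lemma Lbox_mono L a b : normal_logic L -> L (Imp a b) -> L (Imp (Box a) (Box b)).
Proof.
move=> HL H; have [Ht [HK _ Hmp Hs Hn]] := HL.
have K := Hs (fun k => if k == 0 then a else b) _ HK.
exact: (Hmp _ _ K (Hn _ H)).
Qed.

Lemma Lbox_cong L a b : normal_logic L -> L (Iff a b) -> L (Iff (Box a) (Box b)).
Proof.
move=> HL H.
have H1 : L (Imp a b) by apply: Lmp1 H => // v /=; case: (teval v a); case: (teval v b).
have H2 : L (Imp b a) by apply: Lmp1 H => // v /=; case: (teval v a); case: (teval v b).
apply: Lmp2 (Lbox_mono HL H1) (Lbox_mono HL H2) => // v /=.
by case: (v (Box a)); case: (v (Box b)).
Qed.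

Lemma Ldia_ax L a : normal_logic L -> L (Iff (Dia a) (Neg (Box (Neg a)))).
Proof. move=> [_ [_ HD _ Hs _]]; exact: (Hs (fun _ => a) _ HD). Qed.

Lemma Lneg_cong L a b : normal_logic L -> L (Iff a b) -> L (Iff (Neg a) (Neg b)).
Proof. move=> HL; apply: Lmp1 => // v /=; by case: (teval v a); case: (teval v b). Qed.

Lemma Ldia_cong L a b : normal_logic L -> L (Iff a b) -> L (Iff (Dia a) (Dia b)).
Proof.
move=> HL H.
apply: Liff_trans (Ldia_ax _ HL) _ => //.
apply: Liff_trans _ (Liff_sym HL (Ldia_ax _ HL)) => //.
by apply: Lneg_cong => //; apply: Lbox_cong => //; apply: Lneg_cong.
Qed.

Lemma Lsubst_iff L s t r : normal_logic L -> (forall k, L (Iff (s k) (t k))) ->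
  L (Iff (subst s r) (subst t r)).
Proof.
move=> HL H; elim: r => /= [k|a IH|a IHa b IHb|a IHa b IHb|a IH|a IH].
- exact: H.
- exact: Lneg_cong.
- apply: Lmp2 IHa IHb => // v /=.
  by case: (teval v (subst s a)); case: (teval v (subst t a));
     case: (teval v (subst s b)); case: (teval v (subst t b)).
- apply: Lmp2 IHa IHb => // v /=.
  by case: (teval v (subst s a)); case: (teval v (subst t a));
     case: (teval v (subst s b)); case: (teval v (subst t b)).
- exact: Ldia_cong.
- exact: Lbox_cong.
Qed.

Lemma ML_subst hD hB O phi p : ML hD hB O phi p -> defining phi ->
  forall s, (forall k, ML hD hB O phi (s k)) -> ML hD hB O phi (subst s p).
Proof.
move=> Hp Hdef; elim: Hp => [x|p' h _ IH|p' h _ IH|f psi Of _ IH] s Hs /=.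
- exact: Hs.
- exact: (ML_dia h (IH s Hs)).
- exact: (ML_box h (IH s Hs)).
- have [_ vb _] := Hdef f.
  rewrite subst_comp (subst_vb (t := args_subst (fun i => subst s (psi i))) vb).
    exact: ML_op Of (fun i => IH i s Hs).
  move=> k hk; rewrite /args_subst; case: insubP => [i _ _ //|].
  by rewrite hk.
Qed.

Lemma teval_phi phi f v : defining phi ->
  teval v (phi f) = bf_fun f [ffun i : 'I_(bf_ar f) => v (Var i)].
Proof. by move=> Hdef; have [mf _ ev] := Hdef f; rewrite mf_teval // ev. Qed.

Lemma C_in_Clos L hD hB phi (C : bset) f : normal_logic L -> defining phi ->
  C f -> Clos L hD hB phi C f.
Proof.
move=> HL Hdef Cf.
exists (subst (args_subst (fun i : 'I_(bf_ar f) => Var i)) (phi f)); split.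
  by apply: ML_op => // i; apply: ML_var.
have [Ht _] := HL; apply: Ht; apply: taut_iff => v.
have [mf _ ev] := Hdef f.
rewrite teval_phi // teval_subst // ev; congr (bf_fun f _); apply/ffunP => i.
by rewrite !ffunE args_substE.
Qed.

Lemma Clos_clone L hD hB phi (C : bset) : normal_logic L -> defining phi ->
  clone (Clos L hD hB phi C).
Proof.
move=> HL Hdef; have [Ht _] := HL; split.
  move=> n hn i; exists (Var i); split; first exact: ML_var.
  by apply: Ht; apply: taut_iff => v; rewrite teval_phi //= !ffunE.
move=> f m hm g [p [MLp Hp]] Hg.
have [q Hq] := fin_all_exists Hg.
exists (subst (args_subst q) p); split.
  apply: ML_subst => // k; rewrite /args_subst; case: (insub k) => [i|].
    by case: (Hq i).
  exact: ML_var.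
set S := args_subst (fun i => phi (mkBF (g i) hm)).
apply: (Liff_trans HL (b := subst S (phi f))).
  apply: Ht; apply: taut_iff => v.
  have [mf _ ev] := Hdef f.
  rewrite teval_phi // teval_subst // ev ffunE; congr (bf_fun f _).
  by apply/ffunP => i; rewrite !ffunE /S args_substE teval_phi.
apply: (Liff_trans HL (b := subst S p)).
  have [_ [_ _ _ Hs _]] := HL; exact: (Hs S _ Hp).
apply: Lsubst_iff => // k; rewrite /S /args_subst; case: (insub k) => [i|].
  by case: (Hq i).
exact: Liff_refl.
Qed.

Lemma Lbox_iter_mono L a b n : normal_logic L -> L (Imp a b) ->
  L (Imp (box_iter n a) (box_iter n b)).
Proof. by move=> HL H; elim: n => //= n IH; apply: Lbox_mono. Qed.

Lemma Lbox_neg_dia L a n : normal_logic L ->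
  L (Imp (box_iter n (Neg a)) (Neg (dia_iter n a))).
Proof.
move=> HL; elim: n => /= [|n IH].
  by have [Ht _] := HL; apply: Ht => v /=; case: (teval v a).
have H1 := Lbox_mono HL IH.
have H2 := Ldia_ax (dia_iter n a) HL.
apply: Lmp2 H1 H2 => // v /=.
by case: (v (Box (box_iter n (Neg a)))); case: (v (Box (Neg (dia_iter n a))));
   case: (v (Dia (dia_iter n a))).
Qed.

Lemma ML_box_iter (hD hB : bool) O phi n p : hB -> ML hD hB O phi p ->
  ML hD hB O phi (box_iter n p).
Proof. by move=> h Hp; elim: n => //= n IH; exact: (ML_box h IH). Qed.

Lemma ML_dia_iter (hD hB : bool) O phi n p : hD -> ML hD hB O phi p ->
  ML hD hB O phi (dia_iter n p).
Proof. by move=> h Hp; elim: n => //= n IH; exact: (ML_dia h IH). Qed.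

Lemma Liff_both L a b : normal_logic L -> L a -> L b -> L (Iff a b).
Proof. move=> HL; apply: Lmp2 => // v /=; by case: (teval v a); case: (teval v b). Qed.

Lemma Liff_neg L a b : normal_logic L -> L (Neg a) -> L (Neg b) -> L (Iff a b).
Proof. move=> HL; apply: Lmp2 => // v /=; by case: (teval v a); case: (teval v b). Qed.

Lemma top_in_Clos L hD phi (C : bset) n : normal_logic L -> defining phi ->
  L (box_iter n FBot) -> Clos L hD true phi C bf_top.
Proof.
move=> HL Hdef Hn; have [Ht [_ _ Hmp _ _]] := HL.
exists (box_iter n (Var 0)); split; first exact: ML_box_iter (ML_var _ _ _ _ _).
apply: Liff_both => //.
  by apply: Ht => v; rewrite teval_phi // ffunE.
refine (Hmp _ _ _ Hn); apply: Lbox_iter_mono => //; apply: Ht => v /=.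
by case: (v (Var 0)).
Qed.

Lemma bot_in_Clos L hB phi (C : bset) n : normal_logic L -> defining phi ->
  L (box_iter n FBot) -> Clos L true hB phi C bf_bot.
Proof.
move=> HL Hdef Hn; have [Ht [_ _ Hmp _ _]] := HL.
exists (dia_iter n (Var 0)); split; first exact: ML_dia_iter (ML_var _ _ _ _ _).
apply: Liff_neg => //.
  by apply: Ht => v /=; rewrite teval_phi // ffunE.
apply: (Hmp _ _ (Lbox_neg_dia (Var 0) n HL)).
refine (Hmp _ _ _ Hn); apply: Lbox_iter_mono => //; apply: Ht => v /=.
by case: (v (Var 0)).
Qed.

Definition idx n (hn : 0 < n) (k : nat) : 'I_n := odflt (Ordinal hn) (insub k).

Lemma idxE n (hn : 0 < n) (i : 'I_n) : idx hn i = i.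
Proof. by rewrite /idx valK. Qed.

Lemma const_in (D : bset) (b : bool) n (hn : 0 < n) : clone D ->
  D (@mkBF 1 [ffun _ => b] isT) -> D (mkBF [ffun _ : {ffun 'I_n -> bool} => b] hn).
Proof.
move=> [Hp Hc] Hb.
have := Hc (@mkBF 1 [ffun _ => b] isT) n hn (fun _ => [ffun x : {ffun 'I_n -> bool} => x (Ordinal hn)]) Hb
  (fun _ => Hp n hn (Ordinal hn)).
by rewrite /compose /=; congr D; apply: mkBF_ext => x; rewrite !ffunE.
Qed.

Lemma ML_sem (refl hD hB : bool) (C D : bset) phi n (hn : 0 < n) p :
  defining phi -> clone D -> (forall g, C g -> D g) ->
  (hD -> ~~ refl -> D bf_bot) -> (hB -> ~~ refl -> D bf_top) ->
  ML hD hB C phi p ->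
  D (mkBF [ffun x : {ffun 'I_n -> bool} => beval refl (fun k => x (idx hn k)) p] hn).
Proof.
move=> Hdef HD HC Hbot Htop; elim => [x|q h _ IH|q h _ IH|f psi Of _ IH].
- exact: (proj1 HD n hn (idx hn x)).
- case: refl Hbot Htop IH => Hbot Htop IH; first exact: IH.
  exact: const_in (Hbot h isT).
- case: refl Hbot Htop IH => Hbot Htop IH; first exact: IH.
  exact: const_in (Htop h isT).
- have := proj2 HD f n hn (fun i => [ffun x : {ffun 'I_n -> bool} => beval refl (fun k => x (idx hn k)) (psi i)])
    (HC f Of) IH.
  rewrite /compose; congr D; apply: mkBF_ext => x.
  have [mf _ ev] := Hdef f.
  rewrite !ffunE beval_subst // ev; congr (bf_fun f _); apply/ffunP => i.
  by rewrite !ffunE args_substE.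
Qed.

Lemma sat_iff W (R : W -> W -> Prop) V w a b : sat R V w (Iff a b) ->
  (sat R V w a <-> sat R V w b).
Proof. by move=> /= [H1 H2]; split=> H; [case: H1|case: H2]. Qed.

Lemma Clos_sem (refl : bool) L (hD hB : bool) phi (C D : bset) f :
  frame_validates (if refl then R_circ else R_bullet) L -> defining phi ->
  clone D -> (forall g, C g -> D g) ->
  (hD -> ~~ refl -> D bf_bot) -> (hB -> ~~ refl -> D bf_top) ->
  Clos L hD hB phi C f -> D f.
Proof.
move=> Hfv Hdef HD HC Hbot Htop [p [Mp Hp]].
have := ML_sem (bf_pos f) Hdef HD HC Hbot Htop Mp.
congr D; case: f Hp => n F hn Hp /=; apply: mkBF_ext => x.
set v := fun k => x (idx hn k).
have S := sat_iff (Hfv _ Hp (fun k _ => v k) tt).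
have [mf _ ev] := Hdef (mkBF F hn).
rewrite ffunE -/v; have -> : beval refl v p = beval refl v (phi (mkBF F hn)).
  by apply/idP/idP => /(sat_beval refl v) /S /(sat_beval refl v).
rewrite mf_beval // ev /=; congr (F _); apply/ffunP => i.
by rewrite ffunE /v idxE.
Qed.

Lemma Dset_of (hD hB : bool) (C : bset) f :
  (forall D : bset, clone D -> (forall g, C g -> D g) -> (hD -> D bf_bot) ->
     (hB -> D bf_top) -> D f) -> clone C -> Dset hD hB C f.
Proof.
case: hD; case: hB => H HC /=; last by apply: H.
- move=> D HD HS; apply: H => // [g Cg|_|_]; apply: HS; by [left|right; left|right; right].
- move=> D HD HS; apply: H => // [g Cg|_]; apply: HS; by [left|right].
- move=> D HD HS; apply: H => // [g Cg|_]; apply: HS; by [left|right].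
Qed.

Lemma Dset_in (hD hB : bool) (C E : bset) f :
  clone E -> (forall g, C g -> E g) -> (hD -> E bf_bot) -> (hB -> E bf_top) ->
  Dset hD hB C f -> E f.
Proof.
case: hD; case: hB => HE HC Hb Ht /=; last by apply: HC.
- by apply=> // g [/HC|[->|->]] //; [apply: Ht|apply: Hb].
- by apply=> // g [/HC|->] //; apply: Hb.
- by apply=> // g [/HC|->] //; apply: Ht.
Qed.

Theorem theorem4p15 (L : form -> Prop) (phi : BF -> form)
    (hasDia hasBox : bool) (C : bset) :
  normal_logic L -> consistent L -> defining phi -> clone C ->
  (typeA L -> forall f, Clos L hasDia hasBox phi C f <-> C f) /\
  (typeB L -> forall f, Clos L hasDia hasBox phi C f <-> Dset hasDia hasBox C f) /\
  (typeC L -> (forall f, C f -> Clos L hasDia hasBox phi C f) /\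
              (forall f, Clos L hasDia hasBox phi C f -> Dset hasDia hasBox C f)).
Proof.
move=> HL _ Hdef HCl; split; [|split].
- move=> HA f; split; last exact: C_in_Clos.
  by apply: (@Clos_sem true L hasDia hasBox phi C C f HA Hdef HCl).
- move=> [HB [n [n0 Hn]]] f; split.
    move=> Hc; apply: Dset_of => // D HD HCD Hbot Htop.
    by apply: (@Clos_sem false L hasDia hasBox phi C D f HB Hdef HD HCD)
      => // h _; [apply: Hbot|apply: Htop].
  apply: Dset_in.
  + exact: Clos_clone.
  + by move=> g; apply: C_in_Clos.
  + by move=> ->; apply: bot_in_Clos Hn.
  + by move=> ->; apply: top_in_Clos Hn.
- move=> [HB _ _]; split; first by move=> f; apply: C_in_Clos.
  move=> f Hc; apply: Dset_of => // D HD HCD Hbot Htop.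
  by apply: (@Clos_sem false L hasDia hasBox phi C D f HB Hdef HD HCD)
    => // h _; [apply: Hbot|apply: Htop].
Qed.
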